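(* Let $n\ge1$ and $1\le i\le n$. A vector $\mu=\sum_{k=1}^n a_k\lambda_k$ (with real coefficients $a_k$) is a positive weight of the $i$-th fundamental representation $\Lambda_i$ of $a_n$ if and only if the following hold: (1) every $a_k\in\{-1,0,1\}$, not all $a_k$ are zero, the coefficient $a_k$ with the largest index $k$ among the nonzero ones equals $+1$, and the nonzero coefficients alternate in sign when ordered by their index $k$ (so the next largest nonzero one is $-1$, the next $+1$, and so on); and (2) $\sum_{k=1}^n k\,a_k=i$.
   Context: Let $e_1,\dots,e_{n+1}$ be an orthonormal basis of $\mathbb{R}^{n+1}$, $e=\sum_{i}e_i$, and $\varepsilon_i=e_i-\frac{1}{n+1}e$ ($i=1,\dots,n+1$), so that $\sum_{i=1}^{n+1}\varepsilon_i=0$; the root space of $a_n=\mathfrak{sl}_{n+1}(\mathbb C)$ is the hyperplane orthogonal to $e$. Simple roots: $\alpha_i=\varepsilon_i-\varepsilon_{i+1}$, $i=1,\dots,n$. Fundamental weights: $\lambda_i=\sum_{a=1}^i\varepsilon_a$, characterized by $\lambda_i\cdot\alpha_j=\delta_{ij}$. The $i$-th fundamental representation $\Lambda_i$ is the irreducible representation with highest weight $\lambda_i$; its weights are exactly the vectors $\sum_{k\in S}\varepsilon_k$ with $S\subseteq\{1,\dots,n+1\}$, $|S|=i$, and this set $S$ is uniquely determined by the weight. Such a weight is called positive if $n+1\notin S$, i.e. its coefficient of $\varepsilon_{n+1}$ in this $0/1$ expansion is $0$. *)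

(* Defs.v *)
From HB Require Import structures.
From mathcomp Require Import all_boot all_order all_algebra.
Set Implicit Arguments. Unset Strict Implicit. Unset Printing Implicit Defensive.
Import Order.TTheory GRing.Theory Num.Theory.
Local Open Scope ring_scope.

(* Vectors of R^{n+1} are row vectors 'rV[R]_(n.+1); the basis vector e_{j+1}
   of the paper is indexed by j : 'I_(n.+1) (0-based). *)

Definition eps (R : fieldType) (n : nat) (j : 'I_n.+1) : 'rV[R]_n.+1 :=
  \row_(m < n.+1) ((m == j)%:R - (n.+1)%:R^-1).

(* fundamental weight lambda_k = sum_{a=1}^k eps_a (paper indexing, 1<=k<=n) *)
Definition lambda (R : fieldType) (n k : nat) : 'rV[R]_n.+1 :=
  \sum_(a < n.+1 | (a < k)%N) eps R a.

Definition is_weight_fund (R : fieldType) (n i : nat) (mu : 'rV[R]_n.+1) : Prop :=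
  exists S : {set 'I_n.+1}, #|S| = i /\ mu = \sum_(k in S) eps R k.

Definition is_pos_weight_fund (R : fieldType) (n i : nat) (mu : 'rV[R]_n.+1) : Prop :=
  exists S : {set 'I_n.+1},
    [/\ #|S| = i, ord_max \notin S & mu = \sum_(k in S) eps R k].

(* mu = sum_{k=1}^n a_k lambda_k, with a : 'I_n -> R, a k standing for a_{k+1} *)
Definition mu_of (R : fieldType) (n : nat) (a : 'I_n -> R) : 'rV[R]_n.+1 :=
  \sum_(k < n) a k *: lambda R n k.+1.

Definition cond1 (R : fieldType) (n : nat) (a : 'I_n -> R) : Prop :=
  [/\ (forall k, a k = -1 \/ a k = 0 \/ a k = 1),
      (exists k, a k != 0),
      (forall k, a k != 0 -> (forall l : 'I_n, (k < l)%N -> a l = 0) -> a k = 1) &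
      (forall k l : 'I_n, (k < l)%N -> a k != 0 -> a l != 0 ->
         (forall m : 'I_n, (k < m)%N -> (m < l)%N -> a m = 0) -> a k = - a l)].

Definition cond2 (R : fieldType) (n i : nat) (a : 'I_n -> R) : Prop :=
  \sum_(k < n) (k.+1)%:R * a k = i%:R.

(* Main.v *)
Require Import Defs.
From HB Require Import structures.
From mathcomp Require Import all_boot all_order all_algebra.
From mathcomp Require Import zify ring lra.
Import Order.TTheory GRing.Theory Num.Theory.
Local Open Scope ring_scope.

Section Helpers.
Variables (R : realFieldType) (n : nat) (a : 'I_n -> R).

Definition cc (j : nat) : R := \sum_(k < n | (j <= k)%N) a k.

Lemma cc_ge j : (n <= j)%N -> cc j = 0.
Proof. move=> hj; rewrite /cc big1 // => k hk; have := ltn_ord k; lia. Qed.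

Lemma cc_split j l : (j <= l)%N ->
  cc j = \sum_(k < n | (j <= k < l)%N) a k + cc l.
Proof.
move=> hjl; rewrite /cc (bigID (fun k : 'I_n => (k < l)%N)) /=.
congr (_ + _); apply: eq_bigl => k /=.
apply/idP/idP => [/andP [h1 h2]|h]; first lia.
apply/andP; split; lia.
Qed.

Lemma cc_S (o : 'I_n) : cc o = a o + cc o.+1.
Proof.
rewrite (@cc_split o o.+1 (leqnSn o)) (big_pred1 o) // => k /=.
apply/idP/eqP => [h|->]; last by rewrite leqnn ltnSn.
apply: val_inj => /=; lia.
Qed.

Lemma sum_cc : \sum_(j < n.+1) cc j = \sum_(k < n) (k.+1)%:R * a k.
Proof.
rewrite /cc.
under eq_bigr do rewrite big_mkcond.
rewrite exchange_big /=; apply: eq_bigr => k _.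
rewrite -big_mkcond /=.
rewrite -(big_mkord (fun j => (j <= k)%N) (fun _ => a k)).
have hk : (k.+1 <= n.+1)%N by have := ltn_ord k; lia.
rewrite (eq_bigl (fun j => true && (j < k.+1)%N)); last by move=> j; rewrite ltnS.
rewrite -(big_nat_widen 0 k.+1 n.+1 xpredT (fun _ => a k) hk).
by rewrite sumr_const_nat subn0 mulr_natl.
Qed.

Lemma mu_cc : mu_of a = \sum_(j < n.+1) cc j *: eps R j.
Proof.
rewrite /mu_of /lambda.
under eq_bigr do rewrite scaler_sumr big_mkcond.
rewrite exchange_big /=; apply: eq_bigr => j _.
rewrite /cc scaler_suml [RHS]big_mkcond /=; apply: eq_bigr => k _.
by rewrite ltnS; case: (j <= k)%N; rewrite ?scale0r.
Qed.

End Helpers.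
Arguments cc {R n} a j.
Arguments cc_ge {R n} a j.
Arguments cc_split {R n} a j l.
Arguments cc_S {R n} a o.
Arguments sum_cc {R n} a.
Arguments mu_cc {R n} a.

Lemma pick_sum (R : realFieldType) n (x : 'I_n.+1 -> R) m :
  \sum_(j < n.+1) x j * (m == j)%:R = x m.
Proof.
rewrite (bigD1 m) //= eqxx mulr1 big1 ?addr0 // => j hj.
by rewrite eq_sym (negbTE hj) mulr0.
Qed.

Lemma comp_eps (R : realFieldType) n (x : 'I_n.+1 -> R) m :
  (\sum_j x j *: eps R j) 0 m - (\sum_j x j *: eps R j) 0 ord_max
  = x m - x ord_max.
Proof.
rewrite !summxE.
under eq_bigr do rewrite mxE /eps mxE mulrBr.
under [X in _ - X]eq_bigr do rewrite mxE /eps mxE mulrBr.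
rewrite !sumrB !pick_sum; ring.
Qed.

Arguments comp_eps {R n} x m.

Lemma set_eps (R : realFieldType) n (S : {set 'I_n.+1}) :
  \sum_(k in S) eps R k = \sum_j (j \in S)%:R *: eps R j.
Proof.
rewrite big_mkcond; apply: eq_bigr => j _.
by case: (j \in S); rewrite ?scale1r ?scale0r.
Qed.

Lemma cond1_cc (R : realFieldType) n (a : 'I_n -> R) :
  cond1 a -> forall j, cc a j = 0 \/ cc a j = 1.
Proof.
case=> h1 _ h3 h4.
pose P j := (cc a j = 0 \/ cc a j = 1) /\
  (forall k : 'I_n, (k < j)%N -> a k != 0 ->
     (forall l : 'I_n, (k < l)%N -> (l < j)%N -> a l = 0) -> 2 * cc a j = 1 - a k).
have base : P n.
  split; first by left; rewrite cc_ge.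
  move=> k _ nz z; rewrite cc_ge // (h3 k nz) //; first lra.
  by move=> l kl; apply: z => //.
have step : forall d, P (n - d)%N.
  elim=> [|d IH]; first by rewrite subn0.
  case: (ltnP d n) => hd; last first.
    by have -> : (n - d.+1 = n - d)%N by lia.
  have oj : (n - d.+1 < n)%N by lia.
  have ej : (n - d.+1).+1 = (n - d)%N by lia.
  set j := (n - d.+1)%N in oj ej *.
  rewrite -ej in IH; case: IH => [IH1 IH2].
  have cS := cc_S a (Ordinal oj); rewrite /= in cS.
  case: (eqVneq (a (Ordinal oj)) 0) => ha.
    rewrite /P cS ha add0r; split => // k kj nz z.
    apply: IH2 => //; first lia.
    move=> l kl lj; case: (ltnP l j) => lj'; first exact: z.
    have -> : l = Ordinal oj by apply: val_inj => /=; lia.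
    exact: ha.
  have e : 2 * cc a j.+1 = 1 - a (Ordinal oj).
    by apply: IH2 => //= l h h'; lia.
  rewrite /P; split.
    case: (h1 (Ordinal oj)) => [ea|[ea|ea]].
    - by left; rewrite cS; lra.
    - by rewrite ea eqxx in ha.
    - by right; rewrite cS; lra.
  move=> k kj nz z.
  have := h4 k (Ordinal oj) kj nz ha z => ek.
  rewrite cS; lra.
move=> j; case: (leqP n j) => hj; first by left; rewrite cc_ge.
have -> : j = (n - (n - j))%N by lia.
by case: (step (n - j)%N).
Qed.

Lemma sum_set_card (R : realFieldType) n (S : {set 'I_n.+1}) :
  \sum_(j < n.+1) ((j \in S) : nat)%:R = #|S|%:R :> R.
Proof.
rewrite -natr_sum; congr (_%:R); rewrite -sum1_card [RHS]big_mkcond /=.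
by apply: eq_bigr => j _; case: (j \in S).
Qed.

Arguments sum_set_card {R n} S.
Arguments cond1_cc {R n} a _ j.

Theorem mainTheorem2 (R : realFieldType) (n i : nat)
    (hn : (1 <= n)%N) (hi1 : (1 <= i)%N) (hi2 : (i <= n)%N) (a : 'I_n -> R) :
  @is_pos_weight_fund R n i (mu_of a) <-> (cond1 a /\ cond2 i a).
Proof.
have cmax : cc a (@ord_max n) = 0 by rewrite cc_ge.
split.
  case=> S [hS hmax hmu].
  have hcS : forall m : 'I_n.+1, cc a m = ((m \in S) : nat)%:R.
    move=> m; have := comp_eps (fun j => cc a j) m.
    rewrite -mu_cc hmu set_eps comp_eps cmax (negbTE hmax) !subr0 => ->.
    by [].
  have hc : forall j, cc a j = 0 \/ cc a j = 1.
    move=> j; case: (leqP n j) => hj; first by left; rewrite cc_ge.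
    have hj' : (j < n.+1)%N by lia.
    have := hcS (Ordinal hj'); rewrite /= => ->.
    by case: (_ \in _); [right|left].
  have c2 : cond2 i a.
    by rewrite /cond2 -sum_cc (eq_bigr _ (fun j _ => hcS j)) sum_set_card hS.
  have h1 : forall k : 'I_n, a k = -1 \/ a k = 0 \/ a k = 1.
    move=> k; have := cc_S a k.
    by case: (hc k) (hc k.+1) => e1 [] e2 => ?; [right;left|left|right;right|right;left]; lra.
  split => //; split => //.
  - case: (pickP (fun k => a k != 0)) => [k hk|hnone]; first by exists k.
    exfalso.
    have h0 : forall j, cc a j = 0.
      move=> j; rewrite /cc big1 // => k _.
      by have := hnone k; rewrite /= => /negbFE/eqP.
    move: c2; rewrite /cond2 -sum_cc big1 ?h0 //.
    by move/eqP; rewrite eq_sym pnatr_eq0; lia.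
  - move=> k nz z.
    have e0 : cc a k.+1 = 0 by rewrite /cc big1 // => l hl; apply: z.
    have := cc_S a k; rewrite e0 addr0 => e.
    case: (hc k) => e1; last by rewrite -e e1.
    by rewrite -e e1 eqxx in nz.
  - move=> k l kl nz nz' z.
    have e0 : cc a k.+1 = cc a l.
      rewrite (cc_split a k.+1 l kl) big1 ?add0r // => m /andP [h h'].
      by apply: z.
    have ek := cc_S a k; have el := cc_S a l.
    have pm : forall o, a o != 0 -> a o = 1 \/ a o = -1.
      move=> o ho; case: (h1 o) => [->|[e|->]]; [by right|by rewrite e eqxx in ho|by left].
    case: (pm k nz) => ak; case: (pm l nz') => al;
    case: (hc k) => e1; case: (hc l) => e2; case: (hc l.+1) => e3; lra.
case=> c1 c2; have hc := cond1_cc a c1.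
pose S := [set m : 'I_n.+1 | cc a m == 1].
have hcS : forall m : 'I_n.+1, cc a m = ((m \in S) : nat)%:R.
  by move=> m; rewrite inE; case: (hc m) => ->; rewrite ?eqxx // eq_sym oner_eq0.
exists S; split.
- apply/eqP; rewrite -(eqr_nat R) -sum_set_card.
  under eq_bigr do rewrite -hcS.
  by rewrite sum_cc; apply/eqP.
- by rewrite inE cmax eq_sym oner_eq0.
- by rewrite mu_cc set_eps; apply: eq_bigr => j _; rewrite hcS.
Qed.
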